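(* Let $q$ be an odd prime power and $n=q^2+1$. For an integer $a$ with $1\le a\le n-1$, $a\in\mathrm{MinRep}_n$ if and only if either $a=\frac{q^2+1}{2}$ or $a\in[l(q+1)+1,(l+1)(q-1)]$ for some integer $l$ with $0\le l\le\frac{q-3}{2}$. Moreover, $|C_{(q^2+1)/2}|=1$ and $|C_a|=4$ for every $a\in\mathrm{MinRep}_n\setminus\{0,\frac{q^2+1}{2}\}$.
   Context: For $0\le s\le n-1$, $C_s=\{sq^i\bmod n:i\ge0\}$ is the $q$-cyclotomic coset of $s$ modulo $n$; its least element is its coset leader; $\mathrm{MinRep}_n$ is the set of all coset leaders modulo $n$. $[u,v]$ denotes the set of integers $u,u+1,\dots,v$. *)

(* Defs.v *)
From mathcomp Require Import all_boot.
Set Implicit Arguments. Unset Strict Implicit. Unset Printing Implicit Defensive.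

(* Since the sequence (s q^i mod n)_i takes
   values in a set of size n, every value it ever takes already occurs for
   some i < n, so bounding the exponent by n describes the same set. *)
Definition cyc_coset (q n s : nat) : {set 'I_n} :=
  [set x : 'I_n | [exists i : 'I_n, (x : nat) == (s * q ^ i) %% n]].

Definition is_min_rep (q n s : nat) : bool :=
  (s < n) && [forall x in cyc_coset q n s, s <= (x : nat)].

Definition prime_power (q : nat) : Prop :=
  exists p k : nat, prime p /\ 0 < k /\ q = p ^ k.

(* Main.v *)
Require Import Defs.
From mathcomp Require Import all_boot.
From mathcomp Require Import zify.

Definition fq q x := (x * q) %% (q^2+1).
Definition gq q x := (q^2+1 - x) %% (q^2+1).

Lemma n_gt0 q : 0 < q^2+1. Proof. by rewrite addn1. Qed.

Lemma fq_lt q x : fq q x < q^2+1. Proof. exact: ltn_pmod (n_gt0 q). Qed.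
Lemma gq_lt q x : gq q x < q^2+1. Proof. exact: ltn_pmod (n_gt0 q). Qed.

Lemma ffq q x : x < q^2+1 -> fq q (fq q x) = gq q x.
Proof.
move=> hx; rewrite /fq /gq modnMml -mulnA.
case: x hx => [|x] hx; first by rewrite mul0n mod0n subn0 modnn.
have -> : x.+1 * (q * q) = x * (q^2+1) + (q^2+1 - x.+1) by nia.
by rewrite modnMDl.
Qed.

Lemma ggq q x : x < q^2+1 -> gq q (gq q x) = x.
Proof.
move=> hx; rewrite /gq.
case: x hx => [|x] hx; first by rewrite subn0 modnn subn0 modnn.
rewrite (modn_small (m := q^2+1 - x.+1)); last by lia.
rewrite (_ : q^2+1 - (q^2+1 - x.+1) = x.+1); last by lia.
by rewrite modn_small.
Qed.

Lemma fgq q x : x < q^2+1 -> fq q (gq q x) = gq q (fq q x).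
Proof.
move=> hx; rewrite -(ffq _ _ hx) (ffq _ _ (fq_lt q x)) //.
Qed.

Lemma fq_exp q x i : (x * q ^ i.+1) %% (q^2+1) = fq q ((x * q ^ i) %% (q^2+1)).
Proof. by rewrite /fq modnMml expnSr mulnA. Qed.

Definition orb4 q a := [:: a; fq q a; gq q a; gq q (fq q a)].

Lemma orb_in q a i : a < q^2+1 -> (a * q ^ i) %% (q^2+1) \in orb4 q a.
Proof.
move=> ha; elim: i => [|i IH]; first by rewrite expn0 muln1 modn_small // inE eqxx.
rewrite fq_exp; move: IH; rewrite !inE => /or4P [] /eqP ->.
- by rewrite eqxx !orbT.
- by rewrite ffq // eqxx !orbT.
- by rewrite fgq // eqxx !orbT.
- by rewrite fgq ?fq_lt // ffq // ggq // eqxx.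
Qed.

Lemma orb_hit q a y : 2 < q -> a < q^2+1 -> y \in orb4 q a ->
  exists i : 'I_(q^2+1), y = (a * q ^ i) %% (q^2+1).
Proof.
move=> q2 ha; rewrite !inE => /or4P [] /eqP ->.
- have hi : 0 < q^2+1 by lia.
  exists (Ordinal hi); by rewrite /= expn0 muln1 modn_small.
- have hi : 1 < q^2+1 by nia.
  by exists (Ordinal hi); rewrite /= expn1.
- have hi : 2 < q^2+1 by nia.
  exists (Ordinal hi); rewrite /= -ffq //.
  by rewrite (fq_exp q a 1) expn1.
- have hi : 3 < q^2+1 by nia.
  exists (Ordinal hi); rewrite /= -(ffq _ _ (fq_lt q a)).
  by rewrite (fq_exp q a 2) (fq_exp q a 1) expn1.
Qed.

Lemma coset_eq q a : 2 < q -> a < q^2+1 ->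
  cyc_coset q (q^2+1) a = [set x : 'I_(q^2+1) | (x : nat) \in orb4 q a].
Proof.
move=> q2 ha; apply/setP => x; rewrite !in_set; apply/existsP/idP.
- by case=> i /eqP ->; apply: orb_in ha.
- by move/(@orb_hit q a _ q2 ha) => [i ->]; exists i.
Qed.

Lemma orb_lt q a y : a < q^2+1 -> y \in orb4 q a -> y < q^2+1.
Proof. by move=> ha; rewrite !inE => /or4P [] /eqP ->; rewrite ?fq_lt ?gq_lt. Qed.

Lemma minrep_iff q a : 2 < q -> a < q^2+1 ->
  is_min_rep q (q^2+1) a = all (fun y => a <= y) (orb4 q a).
Proof.
move=> q2 ha; rewrite /is_min_rep ha coset_eq //.
apply/forallP/allP.
- move=> H y hy; have hyn := @orb_lt q a y ha hy.
  by have := H (Ordinal hyn); rewrite inE /= hy.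
- by move=> H x; apply/implyP; rewrite inE => /H.
Qed.

Lemma card_vals n (s : seq nat) (H : 0 < n) : uniq s -> all (fun y => y < n) s ->
  #|[set x : 'I_n | (x : nat) \in s]| = size s.
Proof.
move=> us /allP als.
pose o y := Ordinal (ltn_pmod y H).
have -> : [set x : 'I_n | (x : nat) \in s] = [set x in map o s].
  apply/setP => x; rewrite !inE; apply/idP/mapP.
  - move=> xs; exists (val x) => //; apply: val_inj; by rewrite /= modn_small.
  - by move=> [y ys ->]; rewrite /= modn_small ?als.
rewrite cardsE; have /card_uniqP -> : uniq (map o s); last by rewrite size_map.
rewrite map_inj_in_uniq // => y1 y2 h1 h2 /(congr1 val) /=.
by rewrite !modn_small ?als.
Qed.

Lemma fq_formula q i j : 2 < q -> j < q -> i <= q ->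
  (0 < j -> fq q (i*q+j) = j*q - i) /\ (j = 0 -> 0 < i -> fq q (i*q+j) = q^2+1 - i).
Proof.
move=> q2 jq iq; split=> [j0|j0 i0].
- rewrite /fq (_ : (i*q+j)*q = i*(q^2+1) + (j*q - i)); last by nia.
  rewrite modnMDl modn_small //; nia.
- rewrite /fq (_ : (i*q+j)*q = (i-1)*(q^2+1) + (q^2+1 - i)); last by nia.
  rewrite modnMDl modn_small //; nia.
Qed.

Lemma gq_formula q x : 0 < x -> x < q^2+1 -> gq q x = q^2+1 - x.
Proof. move=> x0 xn; rewrite /gq modn_small //; lia. Qed.

Lemma fq_h q m : q = 2*m+1 -> fq q (2*m*m+2*m+1) = 2*m*m+2*m+1.
Proof.
move=> hq; rewrite /fq (_ : (2*m*m+2*m+1)*q = m*(q^2+1) + (2*m*m+2*m+1)); last by nia.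
rewrite modnMDl modn_small //; nia.
Qed.

Lemma gq_h q m : q = 2*m+1 -> gq q (2*m*m+2*m+1) = 2*m*m+2*m+1.
Proof. move=> hq; rewrite gq_formula; nia. Qed.

Lemma main_iff q m a : q = 2*m+1 -> 0 < m -> 1 <= a <= q^2 ->
  is_min_rep q (q^2+1) a <->
  (a = 2*m*m+2*m+1 \/ exists l, l <= m-1 /\ l*(q+1)+1 <= a <= (l+1)*(q-1)).
Proof.
move=> hq m0 /andP [a1 aq].
have q2 : 2 < q by lia.
have an : a < q^2+1 by lia.
rewrite minrep_iff //= leqnn /= andbT.
have [-> | ah] := eqVneq a (2*m*m+2*m+1).
  by rewrite fq_h // gq_h // leqnn; split => // _; left.
rewrite gq_formula // (divn_eq a q).
set i := a %/ q; set j := a %% q.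
have jq : j < q by rewrite ltn_mod; lia.
have ea : a = i*q + j by rewrite /i /j -divn_eq.
clearbody i j.
have iq : i <= q.
  case: (leqP i q) => // h; exfalso.
  have : q.+1 * q <= i * q by rewrite leq_mul2r h orbT.
  nia.
have [j0 | jpos] := posnP j.
- have i0 : 0 < i by nia.
  rewrite (proj2 (fq_formula q i j q2 jq iq)) // (gq_formula q (q^2+1-i)); [| lia | lia].
  split => [/and3P [_ _ H] | [H|[l [hl /andP [H1 H2]]]]]; first by exfalso; nia.
  + by rewrite ea H eqxx in ah.
  + exfalso; subst j; case: (leqP i l) => h.
      have := leq_mul h (leqnn q); move: H1; rewrite ?mulnDl ?mulnDr ?muln1; lia.
    have := leq_mul h (leqnn q); move: H2; rewrite ?mulnDl ?mulnBr ?muln1 ?mul1n; lia.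
- have iq' : i < q by case: (ltngtP i q) => h //; exfalso; nia.
  have jqi : i < j*q by apply: leq_trans iq' _; rewrite leq_pmull.
  rewrite (proj1 (fq_formula q i j q2 jq iq)) // (gq_formula q (j*q - i)); [| lia | ].
  2: { have : j * q <= (q-1) * q by rewrite leq_mul2r; lia.
       rewrite mulnBl mul1n mulnn; lia. }
  split.
  + move=> /and3P [H1 H2 H3].
    have ij : i < j by case: (leqP j i) => h //; nia.
    case: (leqP (i + j) (q - 1)) => h.
    * right; exists i; clear H1 H2 H3; split; first lia.
      rewrite mulnDr !mulnDl !muln1 mulnBr muln1; lia.
    * exfalso; apply: (negP ah); apply/eqP.
      have e1 : (i+j)*q + (j - i) <= q*q + 1.
        have jqi2 : i <= j*q by apply: leq_trans (ltnW iq') _; rewrite leq_pmull.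
        have qq : q^2 = q*q by rewrite mulnn.
        move: H3; rewrite qq mulnDl; clear H1 H2; lia.
      have e2 : (i+j)*q <= q*q by lia.
      have e3 : i + j <= q by rewrite -(@leq_pmul2r q) //; lia.
      have e4 : i + j = q by lia.
      rewrite e4 in e1.
      have e5 : j = i + 1 by lia.
      have e6 : m = i by lia.
      subst; nia.
  + case=> [H | [l [hl /andP [H1 H2]]]]; first by rewrite ea H eqxx in ah.
    have il : i = l.
      case: (ltngtP i l) => h //; exfalso.
        have := leq_mul h (leqnn q); move: H1; rewrite ?mulnDl ?mulnDr ?muln1 ?mul1n; lia.
      have := leq_mul h (leqnn q); move: H2; rewrite ?mulnDl ?mulnBr ?muln1 ?mul1n; lia.
    subst l.
    have hj1 : i + 1 <= j by move: H1; rewrite mulnDr muln1; lia.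
    have hj2 : i + j + 1 <= q by move: H2; rewrite mulnDl mul1n mulnBr muln1; lia.
    have qq : q^2 = q*q by rewrite mulnn.
    rewrite qq; clear H1 H2 ea ah aq an a1 qq.
    apply/and3P; split.
    * have := leq_mul hj1 (leqnn q); rewrite mulnDl mul1n; lia.
    * have h2 : 2 * (i + 1) <= q by lia.
      have := leq_mul h2 (leqnn q); rewrite ?mulnDr ?mulnDl ?muln1 ?mulnA; lia.
    * have h3 : i + j <= q - 1 by lia.
      have := leq_mul h3 (leqnn q); rewrite mulnDl mulnBl mul1n; lia.
Qed.

Lemma orb_uniq q m a : q = 2*m+1 -> 0 < a -> a < q^2+1 -> a <> 2*m*m+2*m+1 ->
  uniq (orb4 q a).
Proof.
move=> hq a0 an ah.
have nh : q^2+1 = 2*(2*m*m+2*m+1) by rewrite hq; nia.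
have ga : gq q a != a.
  rewrite gq_formula //; apply/eqP => e; apply: ah; lia.
have bn := fq_lt q a.
have ff := ffq q a an.
have fg := fgq q (fq q a) bn.
have gg := ggq q a an.
have gg' := ggq q (fq q a) bn.
have ab : a != fq q a.
  apply/eqP=> e; move/eqP: ga; apply; by rewrite -ff -e -e.
have agb : a != gq q (fq q a).
  apply/eqP=> e; move/eqP: ab; apply.
  have : fq q (gq q (fq q a)) = a by rewrite fg ff gg.
  by rewrite -e.
rewrite /orb4 /= !inE !negb_or ab eq_sym ga agb /= andbT -andbA.
have h1 : fq q a != gq q a.
  apply/eqP=> e; move/eqP: agb; apply; by rewrite e gg.
have h2 : fq q a != gq q (fq q a).
  apply/eqP=> e; move/eqP: ga; apply.
  have : fq q (gq q (fq q a)) = a by rewrite fg ff gg.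
  by rewrite -e ff.
have h3 : gq q a != gq q (fq q a).
  apply/eqP=> e; move/eqP: ab; apply.
  by rewrite -[LHS]gg e gg'.
by rewrite h1 h2 h3.
Qed.

Theorem lemma11 (q : nat) :
  prime_power q -> odd q ->
  let n := q ^ 2 + 1 in
  (forall a : nat, 1 <= a <= n - 1 ->
     (is_min_rep q n a <->
        (a = (q ^ 2 + 1) %/ 2 \/
         exists l : nat, l <= (q - 3) %/ 2 /\
           l * (q + 1) + 1 <= a <= (l + 1) * (q - 1)))) /\
  #|cyc_coset q n ((q ^ 2 + 1) %/ 2)| = 1 /\
  (forall a : nat, is_min_rep q n a -> a <> 0 -> a <> (q ^ 2 + 1) %/ 2 ->
     #|cyc_coset q n a| = 4).
Proof.
move=> [p [k [pp [k0 qe]]]] oq n; rewrite /n; clear n.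
have p2 : 1 < p := prime_gt1 pp.
have q2 : 1 < q.
  rewrite qe (_ : k = (k-1).+1); last by lia.
  rewrite expnS; apply: (leq_trans p2); by rewrite leq_pmulr // expn_gt0 (ltnW p2).
have hq : q = 2 * q./2 + 1.
  have := odd_double_half q; rewrite oq -muln2; lia.
set m := q./2 in hq; clearbody m.
have m0 : 0 < m by lia.
have hh : (q^2+1) %/ 2 = 2*m*m+2*m+1.
  rewrite (_ : q^2+1 = (2*m*m+2*m+1)*2); last by rewrite hq; nia.
  by rewrite mulnK.
have h3 : (q-3) %/ 2 = m-1 by lia.
have q3 : 2 < q by lia.
rewrite hh h3; split; [|split].
- move=> a ha; apply: main_iff => //; lia.
- rewrite coset_eq //; last by nia.
  have -> : [set x : 'I_(q^2+1) | (x : nat) \in orb4 q (2*m*m+2*m+1)] =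
            [set x : 'I_(q^2+1) | (x : nat) \in [:: 2*m*m+2*m+1]].
    by apply/setP => x; rewrite !inE fq_h // gq_h // !orbb.
  rewrite card_vals //=; last by rewrite andbT; nia.
  exact: n_gt0.
- move=> a /[dup] ha /andP [an _] a0 ah.
  rewrite coset_eq // card_vals //; first exact: n_gt0.
  + apply: (orb_uniq q m a hq); lia.
  + by apply/allP => y; apply: orb_lt.
Qed.
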